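(* Let $(A,\mathfrak m,k)$ be a commutative Noetherian local ring and let $C$ be a totally acyclic complex of finitely generated free $A$-modules. Then $C$ is contractible at $n$ for some $n\in\mathbb Z$ if and only if $C$ is contractible.
   Context: A complex $C$ of finitely generated free $A$-modules is totally acyclic if $H(C)=0$ and $H(\operatorname{Hom}_A(C,A))=0$. $C$ is contractible at $n$ if there exist $A$-linear maps $s_n:C_n\to C_{n+1}$ and $s_{n-1}:C_{n-1}\to C_n$ such that $\partial^C_{n+1}s_n+s_{n-1}\partial^C_n:C_n\to C_n$ is an isomorphism. $C$ is contractible if there exist maps $s_n:C_n\to C_{n+1}$ for all $n$ such that $s_n,s_{n-1}$ give contractibility at $n$ for every $n$ (equivalently, the identity of $C$ is null-homotopic). *)

(* Defs.v *)
From HB Require Import structures.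
From mathcomp Require Import all_boot all_order all_algebra.
Set Implicit Arguments. Unset Strict Implicit. Unset Printing Implicit Defensive.
Import Order.TTheory GRing.Theory Num.Theory.
Local Open Scope ring_scope.

Definition is_ideal (A : comUnitRingType) (I : A -> Prop) : Prop :=
  [/\ I 0, (forall x y, I x -> I y -> I (x + y)) & (forall a x, I x -> I (a * x))].

Definition fin_gen_ideal (A : comUnitRingType) (I : A -> Prop) : Prop :=
  exists s : seq A, forall x,
    I x <-> exists c : 'I_(size s) -> A, x = \sum_(i < size s) c i * s`_i.

Definition noetherian (A : comUnitRingType) : Prop :=
  forall I : A -> Prop, is_ideal I -> fin_gen_ideal I.

(* Local ring: (A is nontrivial, built into comUnitRingType, and) the
   non-units are closed under addition, i.e. they form the unique maximal ideal. *)
Definition local_ring (A : comUnitRingType) : Prop :=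
  forall x y : A, x \notin GRing.unit -> y \notin GRing.unit ->
    (x + y) \notin GRing.unit.

(* A complex of finitely generated free A-modules indexed by Z:
   C_n = A^(rk n) (column vectors), and
   bd n : C_(n+1) -> C_n is the differential  ∂_(n+1), as an
   (rk n) x (rk (n+1)) matrix acting on column vectors. *)
Record fcomplex (A : comUnitRingType) := FComplex {
  rk : int -> nat;
  bd : forall n : int, 'M[A]_(rk n, rk (n + 1));
  bd_sq : forall n : int, bd n *m bd (n + 1) = 0
}.

Definition acyclic (A : comUnitRingType) (C : fcomplex A) : Prop :=
  forall (n : int) (v : 'cV[A]_(rk C (n + 1))),
    bd C n *m v = 0 ->
    exists w : 'cV[A]_(rk C (n + 1 + 1)), v = bd C (n + 1) *m w.

(* H(Hom_A(C,A)) = 0 : Hom_A(A^r, A) is identified with row vectors, and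
   Hom(∂, A) is precomposition, i.e. right multiplication of row vectors. *)
Definition dual_acyclic (A : comUnitRingType) (C : fcomplex A) : Prop :=
  forall (n : int) (u : 'rV[A]_(rk C (n + 1))),
    u *m bd C (n + 1) = 0 ->
    exists w : 'rV[A]_(rk C n), u = w *m bd C n.

Definition totally_acyclic (A : comUnitRingType) (C : fcomplex A) : Prop :=
  acyclic C /\ dual_acyclic C.

(* Contractibility at the module C_(m+1): maps
   s' : C_(m+1) -> C_(m+2) and s : C_m -> C_(m+1) with
   ∂_(m+2) s' + s ∂_(m+1) an isomorphism of C_(m+1). *)
Definition contractible_at_succ (A : comUnitRingType) (C : fcomplex A) (m : int) : Prop :=
  exists (s' : 'M[A]_(rk C (m + 1 + 1), rk C (m + 1)))
         (s : 'M[A]_(rk C (m + 1), rk C m)),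
    bd C (m + 1) *m s' + s *m bd C m \in unitmx.

(* C is contractible at n  (C_n = C_((n-1)+1)). *)
Definition contractible_at (A : comUnitRingType) (C : fcomplex A) (n : int) : Prop :=
  contractible_at_succ C (n - 1).

Definition contractible (A : comUnitRingType) (C : fcomplex A) : Prop :=
  exists s : forall n : int, 'M[A]_(rk C (n + 1), rk C n),
    forall m : int, bd C (m + 1) *m s (m + 1) + s m *m bd C m \in unitmx.

(* Main.v *)
Require Import Defs.
From Stdlib Require Import ClassicalEpsilon.
From mathcomp Require Import all_boot all_order all_algebra zify.
Set Implicit Arguments. Unset Strict Implicit. Unset Printing Implicit Defensive.
Import GRing.Theory.
Local Open Scope ring_scope.

Section Reg.
Variable A : comUnitRingType.

Definition Npow p (N : 'M[A]_p) k := iter k (mulmx N) 1%:M.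

Lemma Npow_add p (N : 'M[A]_p) a b : Npow N (a + b) = Npow N a *m Npow N b.
Proof.
elim: a => [|a IH]; first by rewrite add0n /Npow /= mul1mx.
by rewrite addSn /Npow /= -/(Npow N (a + b)) IH mulmxA.
Qed.

Lemma horner_mx_sum n' (H : 'M[A]_n'.+1) (q : {poly A}) :
  horner_mx H q = \sum_(i < size q) q`_i *: H ^+ i.
Proof.
rewrite -[in LHS](coefK q) poly_def linear_sum; apply: eq_bigr => i _.
by rewrite linearZ rmorphXn /= horner_mx_X.
Qed.

Lemma reg_lemma p q (D : 'M[A]_(p, q)) (N : 'M_p) (H : 'M_q) :
  D = N *m D *m H -> exists P : 'M_p, D = N *m P *m D.
Proof.
case: q D H => [|q'] D H eqD.
  by exists 0; rewrite !thinmx0.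
set n := q'.+1.
have pw : forall i, D = Npow N i *m D *m H ^+ i.
  elim=> [|i IH]; first by rewrite /Npow /= mul1mx expr0 mulmx1.
  rewrite exprSr /Npow iterS -/(Npow N i) -mulmxE.
  have E : D = N *m (Npow N i *m D *m H ^+ i) *m H by rewrite -IH.
  by rewrite {1}E !mulmxA.
have pw2 : forall i, (i <= n)%N -> Npow N n *m D *m H ^+ i = Npow N (n - i) *m D.
  move=> i le_in; rewrite -{1}(subnK le_in) Npow_add -!mulmxA.
  by rewrite (mulmxA (Npow N i)) -pw.
have CH := Cayley_Hamilton H.
rewrite horner_mx_sum size_char_poly in CH.
have := congr1 (mulmx (Npow N n *m D)) CH.
rewrite mulmx0 mulmx_sumr big_ord_recr /=.
rewrite -scalemxAr pw2 // subnn.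
have -> : (char_poly H)`_n = 1.
  by have := char_poly_monic H; rewrite monicE lead_coefE size_char_poly => /eqP.
rewrite scale1r (_ : Npow N 0 = 1%:M) // mul1mx.
rewrite (eq_bigr (fun i : 'I_n => (char_poly H)`_i *: (N *m Npow N (n - i.+1) *m D))); last first.
  move=> i _; rewrite -scalemxAr pw2; last exact: ltnW (ltn_ord i).
  by rewrite -(subnSK (ltn_ord i)) /Npow iterS.
move=> E; exists (- \sum_(i < n) (char_poly H)`_i *: Npow N (n - i.+1)).
have E' : D = - \sum_(i < n) (char_poly H)`_i *: (N *m Npow N (n - i.+1) *m D).
  by apply/eqP; rewrite -addr_eq0 addrC E.
rewrite {1}E' mulmxN mulNmx mulmx_sumr mulmx_suml; congr (- _).
by apply: eq_bigr => i _; rewrite -scalemxAr -scalemxAl.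
Qed.

Lemma colmul m n p (X : 'M[A]_(m, n)) (Y : 'M_(n, p)) j : X *m col j Y = col j (X *m Y).
Proof. by apply/matrixP => i k; rewrite !mxE; apply: eq_bigr => l _; rewrite !mxE. Qed.

Variable C : fcomplex A.

Definition Q (k : int) := exists s : 'M[A]_(rk C (k + 1), rk C k),
  bd C k *m s *m bd C k = bd C k.

Lemma acyc_mx (hA : acyclic C) k c (M : 'M[A]_(rk C (k + 1), c)) :
  bd C k *m M = 0 -> exists W : 'M_(rk C (k + 1 + 1), c), M = bd C (k + 1) *m W.
Proof.
move=> HM.
have /fin_all_exists [w Hw] : forall j : 'I_c,
    exists w : 'cV[A]_(rk C (k + 1 + 1)), col j M = bd C (k + 1) *m w.
  move=> j; apply: hA; by rewrite colmul HM; apply/matrixP => ? ?; rewrite !mxE.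
exists (\matrix_(i, j) w j i 0); apply/matrixP => i j.
move/matrixP: (Hw j) => /(_ i 0); rewrite !mxE => ->.
by apply: eq_bigr => l _; rewrite !mxE.
Qed.

Lemma dual_mx (hD : dual_acyclic C) k r (M : 'M[A]_(r, rk C (k + 1))) :
  M *m bd C (k + 1) = 0 -> exists W : 'M_(r, rk C k), M = W *m bd C k.
Proof.
move=> HM.
have /fin_all_exists [w Hw] : forall i : 'I_r,
    exists w : 'rV[A]_(rk C k), row i M = w *m bd C k.
  move=> i; apply: hD; by rewrite -row_mul HM; apply/matrixP => ? ?; rewrite !mxE.
exists (\matrix_(i, j) w i 0 j); apply/matrixP => i j.
move/matrixP: (Hw i) => /(_ 0 j); rewrite !mxE => ->.
by apply: eq_bigr => l _; rewrite !mxE.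
Qed.

Lemma Q_up (hA : acyclic C) k : Q k -> Q (k + 1).
Proof.
case=> s Hs.
have [W HW] : exists W : 'M_(rk C (k + 1 + 1), rk C (k + 1)),
    1%:M - s *m bd C k = bd C (k + 1) *m W.
  by apply: acyc_mx => //; rewrite mulmxBr mulmx1 mulmxA Hs subrr.
exists W; by rewrite -HW mulmxBl mul1mx -!mulmxA bd_sq mulmx0 subr0.
Qed.

Lemma Q_down (hD : dual_acyclic C) k : Q (k + 1) -> Q k.
Proof.
case=> s Hs.
have [W HW] : exists W : 'M_(rk C (k + 1), rk C k),
    1%:M - bd C (k + 1) *m s = W *m bd C k.
  by apply: dual_mx => //; rewrite mulmxBl mul1mx Hs subrr.
exists W; by rewrite -mulmxA -HW mulmxBr mulmx1 mulmxA bd_sq mul0mx subr0.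
Qed.

Lemma Q_all (hA : acyclic C) (hD : dual_acyclic C) m : Q m -> forall k, Q k.
Proof.
move=> Hm k; rewrite -(subrK m k) addrC.
elim/int_rec: (k - m) => [|n IH|n IH]; first by rewrite addr0.
  apply: (eq_ind _ (fun x => Q x) (Q_up hA IH)); lia.
apply: (@Q_down hD (m - n.+1%:Z)); apply: (eq_ind _ (fun x => Q x) IH); lia.
Qed.

Lemma Q_of_at m : contractible_at_succ C m -> Q m.
Proof.
case=> s' [s Hu].
set h := bd C _ *m s' + _ in Hu.
have Dh : bd C m *m h = (bd C m *m s) *m bd C m.
  by rewrite mulmxDr mulmxA bd_sq mul0mx add0r mulmxA.
have [P HP] : exists P, bd C m = (bd C m *m s) *m P *m bd C m.
  apply: (reg_lemma (H := invmx h)).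
  by rewrite -Dh mulmxK.
exists (s *m P); by rewrite !mulmxA -HP.
Qed.

Lemma contr_of_all (hA : acyclic C) : (forall k, Q k) -> contractible C.
Proof.
move=> HQ; exists (fun k => proj1_sig (constructive_indefinite_description _ (HQ k))) => m.
have Hs := proj2_sig (constructive_indefinite_description _ (HQ m)).
have Hs' := proj2_sig (constructive_indefinite_description _ (HQ (m + 1))).
set s := proj1_sig _ in Hs *; set s' := proj1_sig _ in Hs' *.
set e := bd C (m + 1) *m s'; set p := s *m bd C m.
have [W HW] : exists W : 'M_(rk C (m + 1 + 1), rk C (m + 1)),
    1%:M - p = bd C (m + 1) *m W.
  by apply: acyc_mx => //; rewrite mulmxBr mulmx1 mulmxA Hs subrr.
have e1p : e *m (1%:M - p) = 1%:M - p.
  by rewrite HW /e mulmxA Hs'.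
have pp : p *m p = p by rewrite /p -mulmxA (mulmxA (bd C m)) Hs.
have ee : e *m e = e by rewrite /e mulmxA Hs'.
have pe : p *m e = 0 by rewrite /p /e -mulmxA (mulmxA (bd C m)) bd_sq mul0mx mulmx0.
have := @mulmx1_unit _ _ (e + p) ((1%:M - p) + (1%:M - e) *m p).
case; last by [].
rewrite mulmxDr mulmxDl e1p mulmxBr mulmx1 pp subrr addr0.
rewrite mulmxDl (mulmxA e) (mulmxA p) mulmxBr mulmx1 ee subrr mul0mx add0r.
by rewrite mulmxBr mulmx1 pe subr0 pp subrK.
Qed.
End Reg.

Theorem mainTheorem3 (A : comUnitRingType) (hNoeth : noetherian A)
  (hloc : local_ring A) (C : fcomplex A) (hC : totally_acyclic C) :
  (exists n : int, contractible_at C n) <-> contractible C.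
Proof.
case: hC => hA hD; split.
  case=> n Hn; apply: contr_of_all => //; apply: (Q_all hA hD).
  exact: Q_of_at Hn.
by case=> s Hs; exists 0; exists (s (0 - 1 + 1)); exists (s (0 - 1)); apply: Hs.
Qed.
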